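(* For every integer $n\ge 4$, in the Maker–Breaker transversal game on an $n\times n$ grid, the first player (Maker) has a winning strategy; moreover Maker can win with a strategy whose first move is the top-left cell $(1,1)$.
   Context: A transversal of an $n\times n$ grid is a set of $n$ cells no two of which lie in the same row or the same column. Cell $(a,b)$ denotes the cell in row $a$ (counted from the top) and column $b$ (counted from the left). In the Maker–Breaker transversal game on an $n\times n$ grid, two players alternately claim unoccupied cells, Maker moving first. Maker wins if at some point he has claimed all $n$ cells of some transversal; otherwise (in particular if the grid is filled without this happening) Breaker wins. Breaker claiming a transversal has no effect. *)

(* Defs.v *)
From mathcomp Require Import all_boot.
Set Implicit Arguments. Unset Strict Implicit. Unset Printing Implicit Defensive.

(* A cell (a,b) of the n x n grid: row a, column b, indexed from 0
   (so the paper's cell (1,1) is (0,0)). *)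
Definition cell (n : nat) : finType := ('I_n * 'I_n)%type.

Definition is_transversal (n : nat) (T : {set cell n}) : Prop :=
  #|T| = n /\
  (forall x y, x \in T -> y \in T -> x != y -> x.1 != y.1 /\ x.2 != y.2).

Definition maker_has_transversal (n : nat) (M : {set cell n}) : Prop :=
  exists T : {set cell n}, is_transversal T /\ T \subset M.

(* maker_wins M B : in the position where Maker has claimed M, Breaker has
   claimed B, and it is Maker's turn, Maker has a winning strategy.
   Maker must pick a free cell c; after that either Maker owns a transversal
   (win), or the game continues: there must be a free cell for Breaker
   (otherwise the grid is full and Breaker wins), and for every answer d of
   Breaker Maker still has a winning strategy.  Since the game is finite,
   this inductive characterisation is exactly the existence of a winning
   strategy for Maker. *)
Inductive maker_wins (n : nat) : {set cell n} -> {set cell n} -> Prop :=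
| MakerWins (M B : {set cell n}) (c : cell n) :
    c \notin M :|: B ->
    (maker_has_transversal (c |: M) \/
     ((exists d : cell n, d \notin (c |: M) :|: B) /\
      (forall d : cell n, d \notin (c |: M) :|: B ->
         maker_wins (c |: M) (d |: B)))) ->
    maker_wins M B.

(* Maker wins from the position (M, B) in which Maker has just moved and it
   is Breaker's turn (same continuation as in the constructor above). *)
Definition maker_wins_after (n : nat) (M B : {set cell n}) : Prop :=
  maker_has_transversal M \/
  ((exists d : cell n, d \notin M :|: B) /\
   (forall d : cell n, d \notin M :|: B -> maker_wins M (d |: B))).

(* Main.v *)
Require Import Defs.
From mathcomp Require Import all_boot zify.
Set Implicit Arguments. Unset Strict Implicit. Unset Printing Implicit Defensive.

Definition nbh (T1 T2 : finType) (R : T1 -> T2 -> bool) (S : {set T1}) : {set T2} :=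
  [set y | [exists x in S, R x y]].

Lemma cardsU_le (T : finType) (A B : {set T}) : #|A :|: B| <= #|A| + #|B|.
Proof. have := cardsUI A B. lia. Qed.

Lemma hall (T1 T2 : finType) (y0 : T2) k : forall (R : T1 -> T2 -> bool) (A : {set T1}),
  #|A| <= k -> (forall S : {set T1}, S \subset A -> #|S| <= #|nbh R S|) ->
  exists f : T1 -> T2, {in A &, injective f} /\ {in A, forall x, R x (f x)}.
Proof.
elim: k => [|k IH] R A hA hH.
  have -> : A = set0 by apply: cards0_eq; lia.
  by exists (fun _ => y0); split => x; rewrite inE.
case: (boolP [exists S : {set T1}, [&& S \proper A, S != set0 & #|nbh R S| <= #|S|]]).
- case/existsP => S /and3P [pSA nS0 tS].
  have sSA : S \subset A := proper_sub pSA.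
  have cS := proper_card pSA.
  have [f1 [i1 r1]] : exists f : T1 -> T2, {in S &, injective f} /\ {in S, forall x, R x (f x)}.
    apply: IH; first lia.
    by move=> U sU; apply: hH; apply: subset_trans sU sSA.
  pose R2 u v := R u v && (v \notin nbh R S).
  have [f2 [i2 r2]] : exists f : T1 -> T2, {in A :\: S &, injective f} /\ {in A :\: S, forall x, R2 x (f x)}.
    apply: IH.
      have := cardsD A S. have -> : A :&: S = S by apply/setIidPr.
      have := card_gt0 S; rewrite nS0. lia.
    move=> U sU.
    have sUS : U :|: S \subset A.
      by rewrite subUset sSA andbT; apply: subset_trans sU (subsetDl _ _).
    have h1 := hH _ sUS.
    have dUS : [disjoint U & S].
      rewrite -setI_eq0; apply/eqP/setP=> x; rewrite !inE.
      apply/negP => /andP [xU xS]. have := subsetP sU x xU. by rewrite !inE xS.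
    have h2 : #|U :|: S| = #|U| + #|S|.
      have := cardsUI U S. move: dUS; rewrite -setI_eq0 => /eqP ->. rewrite cards0. lia.
    have h3 : nbh R (U :|: S) \subset nbh R2 U :|: nbh R S.
      apply/subsetP => y; rewrite !inE => /existsP [x /andP [xUS Rxy]].
      case yS: [exists x0 in S, R x0 y]; first by rewrite orbT.
      rewrite orbF; apply/existsP; exists x.
      move: xUS; rewrite inE => /orP [xU|xS].
        rewrite xU /R2 Rxy /= inE; exact: negbT yS.
      by move: yS => /negbT /existsPn /(_ x); rewrite xS Rxy.
    have h4 := subset_leq_card h3.
    have h5 := cardsU_le (nbh R2 U) (nbh R S).
    lia.
  exists (fun u => if u \in S then f1 u else f2 u); split.
  + move=> x y xA yA /=.
    case xS: (x \in S); case yS: (y \in S).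
    * exact: i1.
    * move=> e. have yD : y \in A :\: S by rewrite inE yS.
      have := r2 y yD; rewrite /R2 -e inE => /andP [_ /existsPn /(_ x)]; by rewrite xS r1.
    * move=> e. have xD : x \in A :\: S by rewrite inE xS.
      have := r2 x xD; rewrite /R2 e inE => /andP [_ /existsPn /(_ y)]; by rewrite yS r1.
    * apply: i2; by rewrite inE ?xS ?yS.
  + move=> x xA /=. case xS: (x \in S); first exact: r1.
    have xD : x \in A :\: S by rewrite inE xS.
    by have /andP [] := r2 x xD.
- move/existsPn => hn.
  case: (set_0Vmem A) => [->|[x xA]].
    by exists (fun _ => y0); split => z; rewrite inE.
  have : 0 < #|nbh R [set x]|.
    have := hH [set x]; rewrite sub1set xA cards1 => /(_ isT). lia.
  case/card_gt0P => y; rewrite inE => /existsP [x' /andP]; rewrite inE => [[/eqP -> Rxy]].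
  pose R' u v := R u v && (v != y).
  have [f' [i' r']] : exists f : T1 -> T2, {in A :\ x &, injective f} /\ {in A :\ x, forall z, R' z (f z)}.
    apply: IH. have := cardsD1 x A. rewrite xA. lia.
    move=> U sU.
    case: (set_0Vmem U) => [->|[u uU]]; first by rewrite cards0.
    have pUA : U \proper A.
      rewrite properEneq; apply/andP; split.
        apply/eqP => e. have := subsetP sU x; rewrite e xA !inE eqxx => /(_ isT). done.
      by apply: subset_trans sU (subD1set _ _).
    have := hn U. rewrite pUA /=.
    have -> : (U != set0) by apply/set0Pn; exists u.
    rewrite /= -ltnNge => h1.
    have h3 : nbh R U \subset y |: nbh R' U.
      apply/subsetP => v; rewrite !inE => /existsP [z /andP [zU Rzv]].
      case: (eqVneq v y) => [//|nvy]; rewrite orFb.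
      by apply/existsP; exists z; rewrite zU /R' Rzv nvy.
    have := subset_leq_card h3. rewrite cardsU1. lia.
  exists (fun u => if u == x then y else f' u); split.
  + move=> a b aA bA /=.
    case: (eqVneq a x) => [ax|nax]; case: (eqVneq b x) => [bx|nbx].
    * by rewrite ax bx.
    * move=> e. have bD : b \in A :\ x by rewrite !inE nbx.
      have := r' b bD. by rewrite /R' -e eqxx andbF.
    * move=> e. have aD : a \in A :\ x by rewrite !inE nax.
      have := r' a aD. by rewrite /R' e eqxx andbF.
    * apply: i'; by rewrite !inE ?nax ?nbx.
  + move=> a aA /=. case: (eqVneq a x) => [->//|nax].
    have aD : a \in A :\ x by rewrite !inE nax.
    by have /andP [] := r' a aD.
Qed.


Lemma konig_transversal n (M : {set cell n}) : 0 < n ->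
  (forall X Y : {set 'I_n}, n < #|X| + #|Y| ->
     exists c : cell n, [/\ c \in M, c.1 \in X & c.2 \in Y]) ->
  maker_has_transversal M.
Proof.
case: n M => [//|n'] M _ hK.
pose R (i j : 'I_n'.+1) := (i, j) \in M.
have [f [fi fR]] : exists f : 'I_n'.+1 -> 'I_n'.+1,
    {in [set: 'I_n'.+1] &, injective f} /\ {in [set: 'I_n'.+1], forall x, R x (f x)}.
  apply: (hall ord0 (k := n'.+1)); first by rewrite cardsT card_ord.
  move=> S _. rewrite leqNgt; apply/negP => hlt.
  have [c [cM cX cY]] : exists c : cell n'.+1, [/\ c \in M, c.1 \in S & c.2 \in ~: nbh R S].
    apply: hK. have := cardsC (nbh R S). rewrite card_ord. move=> h; by rewrite -[X in X < _]h ltn_add2r.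
  move: cY; rewrite !inE => /existsPn /(_ c.1). by rewrite cX /R -surjective_pairing cM.
exists [set (i, f i) | i in [set: 'I_n'.+1]]; split; first split.
- rewrite card_in_imset ?cardsT ?card_ord //.
  by move=> a b aT bT [].
- move=> x y /imsetP [a _ ->] /imsetP [b _ ->] neq /=.
  have nab : a != b by apply: contraNneq neq => ->.
  split => //. apply: contraNneq nab => /fi -> //; by rewrite inE.
- apply/subsetP => x /imsetP [a _ ->]. exact: (fR a (in_setT a)).
Qed.


Definition pair_cover s (pf : cell s -> cell s) :=
  forall X Y : {set 'I_s}, s < #|X| + #|Y| ->
    exists c : cell s, [/\ c.1 \in X, c.2 \in Y, pf c != c, (pf c).1 \in X & (pf c).2 \in Y].

Definition Good s := exists pf : cell s -> cell s, (forall c, pf (pf c) = c) /\ pair_cover pf.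

Lemma freeD1 (T : finType) (x : T) (S : {set T}) : x \notin S -> #|~: (x |: S)| < #|~: S|.
Proof.
move=> xS. have := cardsC S. have := cardsC (x |: S). rewrite cardsU1 xS. lia.
Qed.

Section Game.
Variables (n : nat) (pf : cell n -> cell n).
Hypotheses (pfK : forall c, pf (pf c) = c) (pfC : pair_cover pf) (n0 : 0 < n).

Definition Inv (M B : {set cell n}) := forall c, c \in B -> pf c != c -> pf c \in M.

Lemma pairs_trans (M : {set cell n}) : (forall c, pf c != c -> (c \in M) || (pf c \in M)) ->
  maker_has_transversal M.
Proof.
move=> h. apply: konig_transversal => // X Y hXY.
have [c [c1 c2 nc p1 p2]] := pfC hXY.
case/orP: (h c nc) => cM; first by exists c.
by exists (pf c).
Qed.

Lemma game k : forall M B : {set cell n}, #|~: (M :|: B)| < k -> Inv M B -> maker_wins_after M B.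
Proof.
elim: k => [//|k IH] M B hk hI.
case: (boolP [exists c, [&& pf c != c, c \notin M & pf c \notin M]]); last first.
  move/existsPn => h; left; apply: pairs_trans => c nc.
  by move: (h c); rewrite nc /= negb_and !negbK.
case/existsP => c0 /and3P [nc0 c0M pc0M].
have c0B : c0 \notin B.
  apply/negP => c0B. by move: (hI c0 c0B nc0); rewrite (negbTE pc0M).
have pc0B : pf c0 \notin B.
  apply/negP => pB. have npc : pf (pf c0) != pf c0 by rewrite pfK eq_sym.
  by move: (hI _ pB npc); rewrite pfK (negbTE c0M).
right; split.
  by exists c0; rewrite inE negb_or c0M.
move=> d dMB.
have dM : d \notin M by move: dMB; rewrite inE negb_or => /andP [].
have dB : d \notin B by move: dMB; rewrite inE negb_or => /andP [].
case: (boolP ((pf d != d) && (pf d \notin M :|: (d |: B)))) => [/andP [npd pdf]|hd].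
- apply: (MakerWins (c := pf d)) => //.
  have : maker_wins_after (pf d |: M) (d |: B).
    apply: IH.
      have h1 := freeD1 dMB. rewrite setUCA in h1.
      have h2 := freeD1 pdf. rewrite -setUA. lia.
    move=> x /setU1P [->|xB] nx; apply/setU1P; first by left.
    by right; apply: hI.
  by [].
- have c0d : c0 != d.
    apply/eqP => e; subst d; move/negP: hd; apply; apply/andP; split => //.
    by rewrite !inE !negb_or pc0M pc0B nc0.
  have pc0d : pf c0 != d.
    apply/eqP => e; subst d; move/negP: hd; apply; rewrite pfK; apply/andP; split.
      by rewrite eq_sym.
    by rewrite !inE !negb_or c0M c0B (eq_sym c0) nc0.
  apply: (MakerWins (c := c0)).
    by rewrite !inE negb_or c0M /= negb_or c0B andbT.
  have : maker_wins_after (c0 |: M) (d |: B).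
    apply: IH.
      have c0f : c0 \notin M :|: (d |: B) by rewrite !inE negb_or c0M /= negb_or c0B andbT.
      have h1 := freeD1 dMB. rewrite setUCA in h1.
      have h2 := freeD1 c0f. rewrite -setUA. lia.
    move=> x /setU1P [->|xB] nx; apply/setU1P; last by right; apply: hI.
      right. move: hd; rewrite nx /= negbK !inE => /orP [//|/orP [/eqP e|pB]].
        by move: nx; rewrite e eqxx.
      have npc : pf (pf d) != pf d by rewrite pfK eq_sym.
      by move: (hI _ pB npc); rewrite pfK (negbTE dM).
  by [].
Qed.
End Game.


Lemma sl a b (i : 'I_a) : split (lshift b i) = inl i.
Proof. exact: (unsplitK (inl _ i)). Qed.
Lemma sr a b (i : 'I_b) : split (@rshift a b i) = inr i.
Proof. exact: (unsplitK (inr _ i)). Qed.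

Lemma card_split a b (X : {set 'I_(a + b)}) :
  #|X| = #|[set i | lshift b i \in X]| + #|[set i | @rshift a b i \in X]|.
Proof.
have eX : X = lshift b @: [set i | lshift b i \in X] :|: @rshift a b @: [set i | @rshift a b i \in X].
  apply/setP => x; rewrite !inE; apply/idP/idP.
    move=> xX; have ex : x = unsplit (split x) by rewrite splitK.
    case E: (split x) ex => [i|i] /= ex; subst x.
      by apply/orP; left; apply/imsetP; exists i; rewrite ?inE.
    by apply/orP; right; apply/imsetP; exists i; rewrite ?inE.
  by case/orP => /imsetP [i]; rewrite inE => h ->.
rewrite {1}eX cardsU !card_imset; try exact: lshift_inj; try exact: rshift_inj.
have -> : lshift b @: [set i | lshift b i \in X] :&: @rshift a b @: [set i | @rshift a b i \in X] = set0.
  apply/setP => x; rewrite !inE; apply/negP => /andP [/imsetP [i _ ->] /imsetP [j _ /eqP]].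
  by rewrite eq_sym eq_rlshift.
by rewrite cards0 subn0.
Qed.

Definition psum a b (pa : cell a -> cell a) (pb : cell b -> cell b) (c : cell (a+b)) : cell (a+b) :=
  match split c.1, split c.2 with
  | inl i, inl j => let q := pa (i,j) in (lshift b q.1, lshift b q.2)
  | inr i, inr j => let q := pb (i,j) in (@rshift a b q.1, @rshift a b q.2)
  | _, _ => c end.

Lemma psumL a b pa pb (c : cell a) :
  psum pa pb (lshift b c.1, lshift b c.2) = (lshift b (pa c).1, lshift b (pa c).2).
Proof. by rewrite /psum /= !sl -surjective_pairing. Qed.
Lemma psumR a b pa pb (c : cell b) :
  psum pa pb (@rshift a b c.1, @rshift a b c.2) = (@rshift a b (pb c).1, @rshift a b (pb c).2).
Proof. by rewrite /psum /= !sr -surjective_pairing. Qed.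

Lemma psumLR a b pa pb (i : 'I_a) (j : 'I_b) :
  psum pa pb (lshift b i, @rshift a b j) = (lshift b i, @rshift a b j).
Proof. by rewrite /psum /= sl sr. Qed.
Lemma psumRL a b pa pb (i : 'I_b) (j : 'I_a) :
  psum pa pb (@rshift a b i, lshift b j) = (@rshift a b i, lshift b j).
Proof. by rewrite /psum /= sl sr. Qed.

Lemma good_add a b : Good a -> Good b -> Good (a + b).
Proof.
move=> [pa [paK paC]] [pb [pbK pbC]].
exists (psum pa pb); split.
  move=> [x y].
  rewrite -(splitK x) -(splitK y).
  case: (split x) => i; case: (split y) => j /=.
  - have := psumL pa pb (i, j); rewrite /= => ->.
    by rewrite psumL paK.
  - by rewrite !psumLR.
  - by rewrite !psumRL.
  - have := psumR pa pb (i, j); rewrite /= => ->.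
    by rewrite psumR pbK.
move=> X Y hXY.
move: hXY; rewrite (card_split X) (card_split Y) => hXY.
have [hL|hR] : a < #|[set i | lshift b i \in X]| + #|[set i | lshift b i \in Y]| \/
               b < #|[set i | @rshift a b i \in X]| + #|[set i | @rshift a b i \in Y]| by lia.
- have [c [c1 c2 nc p1 p2]] := paC _ _ hL.
  exists (lshift b c.1, lshift b c.2); rewrite psumL /=.
  move: c1 c2 p1 p2; rewrite !inE => -> -> -> ->; split => //.
- have [c [c1 c2 nc p1 p2]] := pbC _ _ hR.
  exists (@rshift a b c.1, @rshift a b c.2); rewrite psumR /=.
  move: c1 c2 p1 p2; rewrite !inE => -> -> -> ->; split => //.
  apply: contra nc => /eqP [e1 e2]; apply/eqP.
  by rewrite [pb c]surjective_pairing [c in _ = c]surjective_pairing (val_inj (addnI e1)) (val_inj (addnI e2)).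
Qed.


Fixpoint allL (k : nat) (P : seq bool -> bool) : bool :=
  if k is k'.+1 then allL k' (fun l => P (true :: l)) && allL k' (fun l => P (false :: l))
  else P [::].

Lemma allLP k : forall P, allL k P -> forall l, size l = k -> P l.
Proof.
elim: k => [|k IH] P /=; first by move=> h [].
move=> /andP [h1 h2] [//|[] l] /= [e].
  exact: (IH _ h1).
exact: (IH _ h2).
Qed.

Fixpoint look (t : seq ((nat*nat)*(nat*nat))) (c : nat*nat) : nat*nat :=
  match t with
  | [::] => c
  | (x,y) :: t' => if x == c then y else if y == c then x else look t' c
  end.

Definition invb s (f : nat*nat -> nat*nat) :=
  all (fun a => all (fun b => let p := f (a,b) in [&& p.1 < s, p.2 < s & f p == (a,b)])
    (iota 0 s)) (iota 0 s).

Definition coverb s (f : nat*nat -> nat*nat) :=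
  allL s (fun bx => allL s (fun by_ => (s < count id bx + count id by_) ==>
    has (fun a => has (fun b => let p := f (a,b) in
      [&& p != (a,b), nth false bx a, nth false by_ b, nth false bx p.1 & nth false by_ p.2])
      (iota 0 s)) (iota 0 s))).

Lemma cnt s (X : {set 'I_s}) : count id [seq i \in X | i <- enum 'I_s] = #|X|.
Proof.
rewrite count_map cardE -size_filter. apply/perm_size/uniq_perm.
- by rewrite filter_uniq // enum_uniq.
- exact: enum_uniq.
- by move=> x; rewrite mem_filter mem_enum /= mem_enum andbT.
Qed.

Lemma nthb s' (X : {set 'I_s'.+1}) a : a < s'.+1 ->
  nth false [seq i \in X | i <- enum 'I_s'.+1] a = (inord a \in X).
Proof.
move=> ha. rewrite (nth_map ord0) ?size_enum_ord //. congr (_ \in X).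
by apply: val_inj; rewrite /= nth_enum_ord // inordK.
Qed.

Lemma good_of s' f : invb s'.+1 f -> coverb s'.+1 f -> Good s'.+1.
Proof.
move=> hinv hcov.
have hI : forall a b, a < s'.+1 -> b < s'.+1 ->
    [&& (f (a,b)).1 < s'.+1, (f (a,b)).2 < s'.+1 & f (f (a,b)) == (a,b)].
  move=> a b ha hb.
  move/allP: hinv => /(_ a); rewrite mem_iota ha => /(_ isT) /allP /(_ b).
  by rewrite mem_iota hb => /(_ isT).
pose pf (c : cell s'.+1) : cell s'.+1 :=
  ((inord (f (nat_of_ord c.1, nat_of_ord c.2)).1), (inord (f (nat_of_ord c.1, nat_of_ord c.2)).2)).
exists pf; split.
  move=> [x y]; rewrite /pf /=.
  have /and3P [h1 h2 /eqP h3] := hI x y (ltn_ord x) (ltn_ord y).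
  rewrite !inordK // -surjective_pairing h3 /=.
  by rewrite !inord_val.
move=> X Y hXY.
have := allLP hcov (l := [seq i \in X | i <- enum 'I_s'.+1]).
rewrite size_map size_enum_ord => /(_ erefl) h.
have := allLP h (l := [seq i \in Y | i <- enum 'I_s'.+1]).
rewrite size_map size_enum_ord => /(_ erefl).
rewrite !cnt hXY implyTb => /hasP [a haI /hasP [b hbI H]]; move: haI hbI H; rewrite !mem_iota !add0n => ha hb.
have /and3P [h1 h2 _] := hI a b ha hb.
move: ha hb h1 h2 => /andP [_ ha] /andP [_ hb] h1 h2.
move=> /= H; move: H. rewrite (nthb X ha) (nthb Y hb) (nthb X h1) (nthb Y h2) => /and5P [hne ha1 hb1 hp1 hp2].
exists (inord a, inord b); rewrite /pf /= !inordK //; split => //.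
apply: contra hne => /eqP [e1 e2]; apply/eqP.
rewrite [f (a,b)]surjective_pairing.
by rewrite -(inordK h1) -(inordK h2) e1 e2 !inordK.
Qed.
Definition tab4 : seq ((nat*nat)*(nat*nat)) := [:: ((0,0),(0,1)); ((1,1),(1,2)); ((2,2),(2,3)); ((3,3),(3,0)); ((1,0),(2,0)); ((2,1),(3,1)); ((3,2),(0,2)); ((0,3),(1,3))].
Definition tab5 : seq ((nat*nat)*(nat*nat)) := [:: ((3,0),(4,0)); ((3,2),(3,1)); ((2,4),(2,0)); ((1,0),(0,0)); ((0,3),(3,3)); ((1,2),(1,1)); ((1,3),(2,3)); ((0,2),(0,1)); ((2,2),(4,2)); ((4,4),(4,3)); ((2,1),(4,1)); ((1,4),(3,4))].
Definition tab6 : seq ((nat*nat)*(nat*nat)) := [:: ((2,1),(4,4)); ((2,0),(2,2)); ((4,2),(5,2)); ((0,2),(3,2)); ((5,3),(3,0)); ((1,4),(4,3)); ((5,0),(1,0)); ((0,3),(4,5)); ((1,1),(3,1)); ((0,4),(0,0)); ((2,3),(1,3)); ((3,4),(2,4)); ((0,1),(5,1)); ((0,5),(2,5)); ((5,4),(5,5)); ((1,5),(1,2)); ((4,0),(4,1)); ((3,5),(3,3))].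
Definition tab7 : seq ((nat*nat)*(nat*nat)) := [:: ((2,3),(2,0)); ((6,1),(6,4)); ((2,4),(5,4)); ((6,5),(5,5)); ((0,5),(2,5)); ((4,6),(5,1)); ((2,2),(6,0)); ((5,3),(5,2)); ((5,0),(3,4)); ((4,3),(1,2)); ((4,4),(0,4)); ((5,6),(1,6)); ((2,1),(0,1)); ((0,3),(0,2)); ((1,5),(1,4)); ((3,2),(6,2)); ((2,6),(6,6)); ((3,6),(3,1)); ((6,3),(1,3)); ((0,6),(0,0)); ((4,5),(4,2)); ((4,0),(4,1)); ((1,0),(3,0)); ((3,3),(3,5))].

Lemma good4 : Good 4. Proof. apply: (@good_of 3 (look tab4)); by vm_compute. Qed.
Lemma good5 : Good 5. Proof. apply: (@good_of 4 (look tab5)); by vm_compute. Qed.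
Lemma good6 : Good 6. Proof. apply: (@good_of 5 (look tab6)); by vm_compute. Qed.
Lemma good7 : Good 7. Proof. apply: (@good_of 6 (look tab7)); by vm_compute. Qed.


Lemma good_ge4 n : 4 <= n -> Good n.
Proof.
elim/ltn_ind: n => n IH hn.
case: (leqP n 7) => hn7.
  have : n \in [:: 4; 5; 6; 7] by rewrite !inE; lia.
  rewrite !inE => /orP [/eqP ->|/orP [/eqP ->|/orP [/eqP ->|/eqP ->]]].
  - exact: good4.
  - exact: good5.
  - exact: good6.
  - exact: good7.
have e : n = (n - 4) + 4 by lia.
rewrite e; apply: good_add good4; apply: IH; lia.
Qed.

Theorem mainTheorem3 (n : nat) : 4 <= n ->
  maker_wins (@set0 (cell n)) set0 /\
  (forall i : 'I_n, nat_of_ord i = 0 ->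
     maker_wins_after [set (i, i)] (@set0 (cell n))).
Proof.
move=> hn.
have [pf [pfK pfC]] := good_ge4 hn.
have n0 : 0 < n by lia.
have key : forall i : 'I_n, maker_wins_after [set (i, i)] (@set0 (cell n)).
  move=> i. apply: (game pfK pfC n0 (k := #|~: ([set (i, i)] :|: @set0 (cell n))|.+1)) => //.
  by move=> c; rewrite inE.
split; last by move=> i _; exact: key.
pose i0 : 'I_n := Ordinal n0.
apply: (MakerWins (c := (i0, i0))); first by rewrite !inE.
have := key i0. by rewrite setU0.
Qed.
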